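(* Let $k\ge1$, and let $\mathcal P=\{p_1,\dots,p_{k^2}\}$ be a family of real polynomials in the commuting variables $x_1,\dots,x_{2k^2}$ admitting an nc representation $p(X,Y)$ of degree $d>1$. Suppose at least one polynomial of the family contains a term $e\,x_i^sx_j^t$ with $e\ne0$, $t\ge2$ and $s\ge t+2$. Then: (1) there is $a\in\{1,\dots,k\}$ such that one of $x_i,x_j$ is the $(a,a)$ entry of $X$ and the other is the $(a,a)$ entry of $Y$; (2) for each $n\in\{1,\dots,k\}$, letting $x_{i_n}$ be the $(n,n)$ entry of the matrix (among $X,Y$) containing $x_i$ and $x_{j_n}$ the $(n,n)$ entry of the other matrix, the polynomial in position $(n,n)$ of the array $p(X,Y)$ contains the term $e\,x_{i_n}^sx_{j_n}^t$; thus there are exactly $k$ such diagonal pairs and $k$ polynomials $p_{\ell_1},\dots,p_{\ell_k}$ with $p_{\ell_n}=e\,x_{i_n}^sx_{j_n}^t+\cdots$, each occupying the same diagonal position as $x_{i_n}$ and $x_{j_n}$.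
   Context: The family $\mathcal P$ admits an nc representation $p(X,Y)$ if there are $k\times k$ matrices $X,Y$ whose $2k^2$ entries are the variables $x_1,\dots,x_{2k^2}$, each used exactly once, and a noncommutative polynomial $p$ in two letters with real coefficients such that the matrix $p(X,Y)$ is a $k\times k$ array whose entries are $p_1,\dots,p_{k^2}$, each exactly once. A ''term'' means a monomial with its nonzero coefficient after collecting like terms. *)

(* Defs.v *)
From mathcomp Require Import all_boot all_algebra.
From mathcomp Require Import mpoly.
From mathcomp Require Import reals.
Set Implicit Arguments. Unset Strict Implicit. Unset Printing Implicit Defensive.
Import GRing.Theory.
Local Open Scope ring_scope.

(* Noncommutative polynomials in two letters X (false) and Y (true) with
   coefficients in R: a coefficient function on words (seq bool) whose support
   is contained in the words of length <= ncbound. *)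
Record ncpoly (R : nzRingType) := NCPoly {
  nccoef : seq bool -> R;
  ncbound : nat;
  nccoef_bound : forall w, (ncbound < size w)%N -> nccoef w = 0 }.

Definition ncdeg (R : nzRingType) (p : ncpoly R) : nat :=
  (\max_(m < (ncbound p).+1 | [exists w : m.-tuple bool, nccoef p w != 0%R]) m)%N.

Definition ncword_eval (S : pzRingType) (k : nat) (X Y : 'M[S]_k)
  (w : seq bool) : 'M[S]_k :=
  foldr (fun b M => (if b then Y else X) *m M) 1%:M w.

Definition nceval (R : realType) (n k : nat) (p : ncpoly R)
  (X Y : 'M[{mpoly R[n]}]_k) : 'M[{mpoly R[n]}]_k :=
  \sum_(m < (ncbound p).+1) \sum_(w : m.-tuple bool)
     (nccoef p w)%:MP *: ncword_eval X Y w.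

(* Generic matrices: [pos (b, r, c)] is the index of the variable placed at
   entry (r, c) of X (b = false) or of Y (b = true). *)
Definition varmx (R : realType) (n k : nat) (pos : bool * 'I_k * 'I_k -> 'I_n)
  (b : bool) : 'M[{mpoly R[n]}]_k :=
  \matrix_(r, c) 'X_(pos (b, r, c)).

Definition ncrep (R : realType) (k : nat) (pos : bool * 'I_k * 'I_k -> 'I_(2 * k ^ 2))
  (p : ncpoly R) : 'M[{mpoly R[2 * k ^ 2]}]_k :=
  nceval p (varmx R pos false) (varmx R pos true).

Definition mono2 (n : nat) (i j : 'I_n) (s t : nat) : 'X_{1..n} :=
  (U_(i) *+ s + U_(j) *+ t)%MM.

(* Main.v *)
Require Import Defs.
From mathcomp Require Import all_boot all_algebra.
From mathcomp Require Import mpoly.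
From mathcomp Require Import reals.
From mathcomp Require Import zify.
Set Implicit Arguments. Unset Strict Implicit. Unset Printing Implicit Defensive.
Import GRing.Theory Num.Theory.
Local Open Scope ring_scope.

Lemma mono2E n (u v z : 'I_n) a b : (mono2 u v a b) z = (a * (u == z) + b * (v == z))%N.
Proof. by rewrite /mono2 mnmDE !mulmnE !mnm1E mulnC [(b * _)%N]mulnC. Qed.

Lemma mono2_subl n (u v : 'I_n) a b : (0 < a)%N ->
  (mono2 u v a b - U_(u))%MM = mono2 u v a.-1 b.
Proof.
move=> ha; apply/mnmP=> z; rewrite mnmBE !mono2E mnm1E.
case: (u == z); case: (v == z); rewrite /=; lia.
Qed.

Lemma mono2_subr n (u v : 'I_n) a b : (0 < b)%N ->
  (mono2 u v a b - U_(v))%MM = mono2 u v a b.-1.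
Proof.
move=> ha; apply/mnmP=> z; rewrite mnmBE !mono2E mnm1E.
case: (u == z); case: (v == z); rewrite /=; lia.
Qed.

Lemma mono2_le n (u v x : 'I_n) a b :
  (U_(x) <= mono2 u v a b)%MM = ((u == x) && (0 < a)%N) || ((v == x) && (0 < b)%N).
Proof.
rewrite lep1mP mono2E.
case: (u == x); case: (v == x); rewrite /=; lia.
Qed.

Lemma mono2_eq0 n (u v : 'I_n) a b : (mono2 u v a b == 0%MM) = (a == 0%N) && (b == 0%N).
Proof.
apply/eqP/andP => [h|[/eqP-> /eqP->]].
  have h1 := congr1 (fun m : 'X_{1..n} => m u) h; have h2 := congr1 (fun m : 'X_{1..n} => m v) h.
  move: h1 h2; rewrite /= !mono2E !mnm0E !eqxx.
  by case: (u == v); case: (v == u); rewrite /=; split; apply/eqP; lia.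
by apply/mnmP=> z; rewrite mono2E mnm0E.
Qed.

Lemma coefXM (R : ringType) n (x : 'I_n) (q : {mpoly R[n]}) mm :
  ('X_x * q)@_mm = if (U_(x) <= mm)%MM then q@_(mm - U_(x)) else 0.
Proof.
rewrite -commr_mpolyX; case: ifP => h.
  by rewrite -{1}(submK h) addmC mcoeffMX.
apply/eqP; rewrite mcoeff_eq0 (perm_mem (msuppMX _ _)); apply/negP => /mapP [m' _ hm].
by move: h; rewrite hm lem_addr.
Qed.

Definition E (R : realType) n k (pos : bool * 'I_k * 'I_k -> 'I_n) w :=
  ncword_eval (varmx R pos false) (varmx R pos true) w.

Lemma E_cons (R : realType) n k (pos : bool * 'I_k * 'I_k -> 'I_n) x w r c :
  E R pos (x :: w) r c = \sum_m 'X_(pos (x, r, m)) * E R pos w m c.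
Proof.
rewrite /E /= mxE; apply: eq_bigr => m _.
by case: x; rewrite /varmx mxE.
Qed.

Lemma E_nil (R : realType) n k (pos : bool * 'I_k * 'I_k -> 'I_n) r c mm :
  (E R pos [::] r c)@_mm = ((r == c) && (mm == 0%MM))%:R.
Proof.
rewrite /E /= mxE mcoeffMn mcoeff1.
by case: (r == c); case: (mm == 0%MM).
Qed.

Lemma E_cons_coef (R : realType) n k (pos : bool * 'I_k * 'I_k -> 'I_n) x w r c mm :
  (E R pos (x :: w) r c)@_mm = \sum_m (if (U_(pos (x, r, m)) <= mm)%MM then
      (E R pos w m c)@_(mm - U_(pos (x, r, m))) else 0).
Proof.
rewrite E_cons raddf_sum; apply: eq_bigr => m _; exact: coefXM.
Qed.
Lemma sum_neq0 (R : nzRingType) (I : finType) (F : I -> R) :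
  \sum_i F i != 0 -> exists i, F i != 0.
Proof.
move=> h; case: (pickP (fun i => F i != 0)) => [i hi|h0]; first by exists i.
by move: h; rewrite big1 ?eqxx // => i _; apply/eqP; move: (h0 i) => /= /negbFE.
Qed.

Lemma flow (R : realType) n k (pos : bool * 'I_k * 'I_k -> 'I_n) (inj : injective pos)
  bi ri ci bj rj cj w : forall r c a b,
  (E R pos w r c)@_(mono2 (pos (bi, ri, ci)) (pos (bj, rj, cj)) a b) != 0 ->
  forall v, (a * (ri == v) + b * (rj == v) + (c == v) = a * (ci == v) + b * (cj == v) + (r == v))%N.
Proof.
elim: w => [|x w IH] r c a b.
  rewrite E_nil pnatr_eq0 eqb0 negbK => /andP [/eqP -> ].
  by rewrite mono2_eq0 => /andP [/eqP -> /eqP ->] v.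
rewrite E_cons_coef => /sum_neq0 [m]; case: ifP => [hle hne|]; last by rewrite eqxx.
move: hle; rewrite mono2_le => /orP [] /andP [/eqP h ha].
  move: hne; rewrite -h mono2_subl // => /IH {}IH v; move: (IH v).
  case: (inj _ _ h) => _ -> ->.
  case: (ri == v); case: (rj == v); case: (c == v); case: (m == v); case: (cj == v); case: (r == v); rewrite /=; lia.
move: hne; rewrite -h mono2_subr // => /IH {}IH v; move: (IH v).
case: (inj _ _ h) => _ -> ->.
case: (ri == v); case: (rj == v); case: (c == v); case: (m == v); case: (ci == v); case: (r == v); rewrite /=; lia.
Qed.

Lemma loops (R : realType) n k (pos : bool * 'I_k * 'I_k -> 'I_n) (inj : injective pos)
  bu A bv B w : forall r c a b,
  (E R pos w r c)@_(mono2 (pos (bu, A, A)) (pos (bv, B, B)) a b) != 0 ->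
  [/\ r = c, (0 < a)%N -> r = A & (0 < b)%N -> r = B].
Proof.
elim: w => [|x w IH] r c a b.
  rewrite E_nil pnatr_eq0 eqb0 negbK => /andP [/eqP -> ].
  by rewrite mono2_eq0 => /andP [/eqP -> /eqP ->].
rewrite E_cons_coef => /sum_neq0 [m]; case: ifP => [hle hne|]; last by rewrite eqxx.
move: hle; rewrite mono2_le => /orP [] /andP [/eqP h ha].
  move: hne; rewrite -h mono2_subl // => /IH [h1 h2 h3].
  case: (inj _ _ h) => _ hr hm.
  split => [|_|hb]; first by rewrite -hr hm.
    by rewrite hr.
  by rewrite -hr hm h3.
move: hne; rewrite -h mono2_subr // => /IH [h1 h2 h3].
case: (inj _ _ h) => _ hr hm.
split => [|hb|_]; first by rewrite -hr hm.
  by rewrite -hr hm h2 //; lia.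
by rewrite hr.
Qed.
Lemma count_coef (R : realType) n k (pos : bool * 'I_k * 'I_k -> 'I_n) (inj : injective pos)
  b0 N w : forall c a b,
  (E R pos w N c)@_(mono2 (pos (b0, N, N)) (pos (~~ b0, N, N)) a b) =
  ((c == N) && (count_mem b0 w == a) && (count_mem (~~ b0) w == b))%:R.
Proof.
have hb1 : (~~ b0 == b0) = false by case: b0.
have hb2 : (b0 == ~~ b0) = false by clear hb1; case: b0.
elim: w => [|x w IH] c a b.
  rewrite E_nil mono2_eq0 /= [N == c]eq_sym.
  by case: (c == N); case: a; case: b.
rewrite E_cons_coef (bigD1 N) //= big1 ?addr0; last first.
  move=> m hm; rewrite mono2_le !(inj_eq inj) !xpair_eqE !eqxx !andbT.
  by rewrite [N == m]eq_sym (negbTE hm) !andbF.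
rewrite mono2_le !(inj_eq inj) !xpair_eqE !eqxx !andbT.
case: (eqVneq x b0) => [->|hx].
  rewrite /= hb1 ?orbF.
  rewrite hb2 add0n add1n; case: a => [|a] /=; first by rewrite andbF.
  by rewrite mono2_subl // IH eqSS.
have -> : x = ~~ b0 by move: hx; clear; case: x; case: b0.
rewrite /= eqxx add0n add1n; case: b => [|b] /=; first by rewrite andbF.
by rewrite mono2_subr // IH eqSS.
Qed.

Lemma ncrep_coef (R : realType) k (pos : bool * 'I_k * 'I_k -> 'I_(2 * k ^ 2)) p r c mm :
  (ncrep pos p r c)@_mm = \sum_(m < (ncbound p).+1) \sum_(w : m.-tuple bool)
     nccoef p w * (E R pos w r c)@_mm.
Proof.
rewrite /ncrep /nceval summxE raddf_sum; apply: eq_bigr => m _.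
rewrite summxE raddf_sum; apply: eq_bigr => w _.
by rewrite mxE; apply: mcoeffCM.
Qed.
Unset Implicit Arguments.

Theorem lemma2p16 (R : realType) (k : nat) (hk : (0 < k)%N)
  (pos : bool * 'I_k * 'I_k -> 'I_(2 * k ^ 2)) (hpos : bijective pos)
  (p : ncpoly R) (hdeg : (1 < ncdeg p)%N)
  (i j : 'I_(2 * k ^ 2)) (hij : i != j) (e : R) (he : e != 0)
  (s t : nat) (ht : (2 <= t)%N) (hs : (t + 2 <= s)%N)
  (r0 c0 : 'I_k) (hterm : (ncrep pos p r0 c0)@_(mono2 i j s t) = e) :
  exists (a : 'I_k) (b : bool),
    [/\ pos (b, a, a) = i, pos (~~ b, a, a) = j &
        forall n : 'I_k,
          (ncrep pos p n n)@_(mono2 (pos (b, n, n)) (pos (~~ b, n, n)) s t) = e].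
Proof.
have inj : injective pos := bij_inj hpos.
case: hpos => g hg1 hg2.
have [[[bi ri] ci] hi] : exists x, pos x = i by exists (g i).
have [[[bj rj] cj] hj] : exists x, pos x = j by exists (g j).
subst i j.
have hw : exists w : seq bool,
    (E R pos w r0 c0)@_(mono2 (pos (bi, ri, ci)) (pos (bj, rj, cj)) s t) != 0.
  move: hterm; rewrite ncrep_coef => hterm.
  have : \sum_(m < (ncbound p).+1) \sum_(w : m.-tuple bool)
     nccoef p w * (E R pos w r0 c0)@_(mono2 (pos (bi, ri, ci)) (pos (bj, rj, cj)) s t) != 0
    by rewrite hterm.
  move=> /sum_neq0 [m] /sum_neq0 [w]; rewrite mulf_eq0 negb_or => /andP [_ hc].
  by exists w.
case: hw => w hw.
have hf := flow inj hw.
have hri : ri = ci.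
  case: (eqVneq ri ci) => // hne; move: (hf ri).
  rewrite eqxx [ci == ri]eq_sym (negbTE hne).
  case: (rj == ri); case: (c0 == ri); case: (cj == ri); case: (r0 == ri) => /=; lia.
subst ci.
have hrj : rj = cj.
  case: (eqVneq rj cj) => // hne; move: (hf rj).
  rewrite eqxx [cj == rj]eq_sym (negbTE hne).
  case: (ri == rj); case: (c0 == rj); case: (r0 == rj) => /=; lia.
subst cj.
have [h1 h2 h3] := loops inj hw.
have e1 : r0 = ri by apply: h2; lia.
have e2 : r0 = rj by apply: h3; lia.
subst c0 ri rj.
have hb : bj = ~~ bi.
  case: (eqVneq bj bi) => [ebb|]; last by clear; case: bi; case: bj.
  by move: hij; rewrite ebb eqxx.
subst bj.
exists r0, bi; split => // n.
rewrite -hterm !ncrep_coef; apply: eq_bigr => m _; apply: eq_bigr => w' _.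
by rewrite !count_coef // !eqxx.
Qed.
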